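(* Let $p\ge 2$, $w\ge 0$, $z\in\mathbb{R}^{p-1}$. For $\lambda>0$ let $(\hat\beta^+(\lambda),\hat\beta^-(\lambda),\hat\theta(\lambda))$ be the unique solution of \[ \min_{\beta^\pm\in\mathbb{R},\,\theta\in\mathbb{R}^{p-1}}\ \frac12\bigl(w-(\beta^+-\beta^-)\bigr)^2+\frac12\|z-\theta\|_2^2+\lambda(\beta^++\beta^-)+\lambda\|\theta\|_1 \quad\text{s.t. } \beta^+\ge0,\ \beta^-\ge0,\ \|\theta\|_1\le\beta^++\beta^-, \] and write $\hat\beta=\hat\beta^+-\hat\beta^-$. Define $\tilde\lambda_1=\min\{\lambda\ge0:\|S(z,\lambda)\|_1+\lambda\le w\}$, $\tilde\lambda_3=\max\{\lambda\ge0:\|S(z,2\lambda)\|_1\ge w\}$ and $\tilde\lambda_4=(w+\|z\|_\infty)/2$. Then for $\lambda>0$: 1. (Big main effect) If $\|z\|_\infty\le\|z\|_1<w$: for $\lambda\ge w$, $\hat\beta=0$ and $\hat\theta=0$; for $\tilde\lambda_1\le\lambda<w$, $\hat\beta=w-\lambda$ and $\hat\theta=S(z,\lambda)$; for $\lambda<\tilde\lambda_1$, there is $\hat\alpha(\lambda)>0$ with $\hat\beta=w-\lambda+\hat\alpha(\lambda)$ and $\hat\theta=S(z,\lambda+\hat\alpha(\lambda))$. 2. (Moderate main effect) If $\|z\|_\infty\le w\le\|z\|_1$: for $\lambda\ge w$, $\hat\beta=0$ and $\hat\theta=0$; for $\tilde\lambda_1\le\lambda<w$, $\hat\beta=w-\lambda$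 and $\hat\theta=S(z,\lambda)$; for $\tilde\lambda_3\le\lambda<\tilde\lambda_1$, there is $\hat\alpha(\lambda)>0$ with $\hat\beta=w-\lambda+\hat\alpha(\lambda)$ and $\hat\theta=S(z,\lambda+\hat\alpha(\lambda))$; for $\lambda<\tilde\lambda_3$, $\hat\beta=w$ and $\hat\theta=S(z,2\lambda)$. 3. (Big interaction) If $w<\|z\|_\infty\le\|z\|_1$: for $\lambda\ge\tilde\lambda_4$, $\hat\beta=0$ and $\hat\theta=0$; for $\tilde\lambda_3\le\lambda<\tilde\lambda_4$, there is $\hat\alpha(\lambda)>0$ with $\hat\beta=w-\lambda+\hat\alpha(\lambda)$ and $\hat\theta=S(z,\lambda+\hat\alpha(\lambda))$; for $\lambda<\tilde\lambda_3$, $\hat\beta=w$ and $\hat\theta=S(z,2\lambda)$.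
   Context: $S(x,t)=\mathrm{sign}(x)\cdot(|x|-t)_+$ is the soft-thresholding function, applied componentwise to vectors. The solution of the displayed problem exists and is unique for every $\lambda>0$. Conventions: the minimum of an empty set is $+\infty$, the maximum of an empty set is $-\infty$, and the maximum of a set unbounded above is $+\infty$. *)

(* Defs.v *)
From HB Require Import structures.
From mathcomp Require Import all_boot all_order all_algebra.
From mathcomp Require Import classical_sets reals ereal.
Set Implicit Arguments. Unset Strict Implicit. Unset Printing Implicit Defensive.
Import Order.TTheory GRing.Theory Num.Theory.
Local Open Scope classical_set_scope.
Local Open Scope ring_scope.

Section Defs.
Variable R : realType.

Definition soft (x t : R) : R := Num.sg x * Num.max (`|x| - t) 0.

Definition softv n (z : 'I_n -> R) (t : R) : 'I_n -> R := fun i => soft (z i) t.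

Definition l1norm n (v : 'I_n -> R) : R := \sum_(i < n) `|v i|.
Definition linfnorm n (v : 'I_n -> R) : R := \big[Num.max/0]_(i < n) `|v i|.

Definition objective n (w : R) (z : 'I_n -> R) (lam : R)
  (bp bm : R) (th : 'I_n -> R) : R :=
  2^-1 * (w - (bp - bm)) ^+ 2 + 2^-1 * (\sum_(i < n) (z i - th i) ^+ 2)
  + lam * (bp + bm) + lam * l1norm th.

Definition feasible n (bp bm : R) (th : 'I_n -> R) : Prop :=
  0 <= bp /\ 0 <= bm /\ l1norm th <= bp + bm.

Definition is_solution n (w : R) (z : 'I_n -> R) (lam : R)
  (bp bm : R) (th : 'I_n -> R) : Prop :=
  feasible bp bm th /\
  forall bp' bm' (th' : 'I_n -> R), feasible bp' bm' th' ->
    objective w z lam bp bm th <= objective w z lam bp' bm' th'.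

(* tilde lambda_1 = min { l >= 0 : ||S(z,l)||_1 + l <= w }  (+oo if empty).
   The set is closed, so the infimum is the minimum when the set is nonempty. *)
Definition tlam1 n (w : R) (z : 'I_n -> R) : \bar R :=
  ereal_inf [set l%:E | l in [set l : R | 0 <= l /\ l1norm (softv z l) + l <= w]].

(* tilde lambda_3 = max { l >= 0 : ||S(z,2l)||_1 >= w }  (-oo if empty,
   +oo if unbounded above). The set is closed, so sup = max when bounded. *)
Definition tlam3 n (w : R) (z : 'I_n -> R) : \bar R :=
  ereal_sup [set l%:E | l in [set l : R | 0 <= l /\ w <= l1norm (softv z (2 * l))]].

Definition tlam4 n (w : R) (z : 'I_n -> R) : R := (w + linfnorm z) / 2.

End Defs.

(* Main.v *)
Require Import Defs.
From HB Require Import structures.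
From mathcomp Require Import all_boot all_order all_algebra.
From mathcomp Require Import classical_sets reals ereal.
From mathcomp Require Import boolp topology normedtype.
From mathcomp Require Import lra ring.
Import Order.TTheory GRing.Theory Num.Theory.
Import numFieldNormedType.Exports.
Local Open Scope ring_scope.
Set Implicit Arguments. Unset Strict Implicit.

Section S.
Variable R : realType.

Lemma soft_facts (x a : R) : 0 <= a ->
  [/\ `|x - soft x a| <= a, (x - soft x a) * soft x a = a * `|soft x a|
    & `|soft x a| = Num.max (`|x| - a) 0].
Proof.
move=> a0; rewrite /soft.
have hm : (`|x| - a <= 0 /\ Num.max (`|x| - a) 0 = 0) \/
          (0 < `|x| - a /\ Num.max (`|x| - a) 0 = `|x| - a).
  by rewrite maxEle; case: leP => h; [left | right].
have [x0|x0|->] := ltrgtP x 0.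
- rewrite ltr0_sg //; move: hm; rewrite ltr0_norm // => -[[h ->]|[h ->]].
  + rewrite mulr0 subr0 normr0 mulr0 ltr0_norm //; split => //; lra.
  + rewrite normrM normrN1 mul1r ger0_norm; last lra.
    rewrite ler_norml; split; lra.
- rewrite gtr0_sg //; move: hm; rewrite gtr0_norm // => -[[h ->]|[h ->]].
  + rewrite mulr0 subr0 normr0 mulr0 gtr0_norm //; split => //; lra.
  + rewrite mul1r !ger0_norm; try lra.
    split => //; [lra | ring].
- rewrite sgr0 !mul0r subr0 normr0 mulr0; split => //.
  - by rewrite mulr0.
  - rewrite sub0r maxEle ifT //; lra.
Qed.
Lemma coord_ineq (z t t' K : R) : `|z - t| <= K -> (z - t) * t = K * `|t| ->
  2^-1 * (z - t) ^+ 2 + 2^-1 * (t' - t) ^+ 2 + K * `|t| <= 2^-1 * (z - t') ^+ 2 + K * `|t'|.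
Proof.
move=> h1 h2.
have h3 : (z - t) * t' <= K * `|t'|.
  apply: (le_trans (ler_norm _)); rewrite normrM.
  by apply: ler_wpM2r.
have e : 2^-1 * (z - t') ^+ 2 = 2^-1 * (z - t) ^+ 2 + 2^-1 * (t' - t) ^+ 2 - (z - t) * t' + (z - t) * t.
  by field.
rewrite e; lra.
Qed.

Lemma cert n (w : R) (z : 'I_n -> R) (lam bsp bsm : R) (ths : 'I_n -> R) (K : R) :
 (forall i, `|z i - ths i| <= K) ->
 (forall i, (z i - ths i) * ths i = K * `|ths i|) ->
 (forall b' s' t' : R, `|b'| <= t' -> 0 <= s' <= t' ->
    0 <= - (w - (bsp - bsm)) * (b' - (bsp - bsm)) + K * (l1norm ths - s')
         + lam * (t' - (bsp + bsm)) + lam * (s' - l1norm ths)) ->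
 forall (bp' bm' : R) (th' : 'I_n -> R), feasible bp' bm' th' ->
 objective w z lam bsp bsm ths + 2^-1 * ((bp' - bm') - (bsp - bsm)) ^+ 2
   + 2^-1 * (\sum_i (th' i - ths i) ^+ 2) <= objective w z lam bp' bm' th'.
Proof.
move=> hK hc hs bp' bm' th' [hp' [hm' hl']].
have hsum : \sum_i (2^-1 * (z i - ths i) ^+ 2 + 2^-1 * (th' i - ths i) ^+ 2 + K * `|ths i|)
    <= \sum_i (2^-1 * (z i - th' i) ^+ 2 + K * `|th' i|).
  by apply: ler_sum => i _; apply: coord_ineq.
rewrite !big_split /= -!mulr_sumr in hsum.
have hs0 := hs (bp' - bm') (l1norm th') (bp' + bm').
have hn : 0 <= l1norm th' by apply: sumr_ge0 => i _.
have hb : `|bp' - bm'| <= bp' + bm' by rewrite ler_norml; apply/andP; split; lra.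
have := hs0 hb (ltac:(apply/andP; split; lra)).
rewrite /objective /l1norm in hsum hn hl' * => hs1.
have e : 2^-1 * (w - (bp' - bm')) ^+ 2 = 2^-1 * (w - (bsp - bsm)) ^+ 2
   + 2^-1 * ((bp' - bm') - (bsp - bsm)) ^+ 2 - (w - (bsp - bsm)) * ((bp' - bm') - (bsp - bsm)).
  by field.
rewrite e.
lra.
Qed.

Lemma uniq_sol n (w : R) (z : 'I_n -> R) (lam bp bm : R) (th : 'I_n -> R)
  (bsp bsm : R) (ths : 'I_n -> R) (K : R) :
 is_solution w z lam bp bm th -> feasible bsp bsm ths ->
 (forall i, `|z i - ths i| <= K) ->
 (forall i, (z i - ths i) * ths i = K * `|ths i|) ->
 (forall b' s' t' : R, `|b'| <= t' -> 0 <= s' <= t' ->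
    0 <= - (w - (bsp - bsm)) * (b' - (bsp - bsm)) + K * (l1norm ths - s')
         + lam * (t' - (bsp + bsm)) + lam * (s' - l1norm ths)) ->
 bp - bm = bsp - bsm /\ th = ths.
Proof.
move=> [hf hopt] hfs h1 h2 h3.
have A := hopt _ _ _ hfs.
have B := cert h1 h2 h3 hf.
have q1 : 0 <= ((bp - bm) - (bsp - bsm)) ^+ 2 by apply: sqr_ge0.
have q2 : 0 <= \sum_i (th i - ths i) ^+ 2 by apply: sumr_ge0 => i _; apply: sqr_ge0.
have e1 : ((bp - bm) - (bsp - bsm)) ^+ 2 = 0 by lra.
have e2 : \sum_i (th i - ths i) ^+ 2 = 0 by lra.
split.
  by apply/eqP; rewrite -subr_eq0 -sqrf_eq0 e1.
apply: funext => i.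
have /psumr_eq0P := e2 => /(_ (fun i _ => sqr_ge0 _)) /(_ i isT) /eqP.
by rewrite sqrf_eq0 subr_eq0 => /eqP.
Qed.

Definition Fz n (z : 'I_n -> R) (a : R) := \sum_i Num.max (`|z i| - a) 0.

Lemma Fz_l1 n (z : 'I_n -> R) (a : R) : 0 <= a -> l1norm (softv z a) = Fz z a.
Proof.
move=> a0; apply: eq_bigr => i _.
by have [_ _ ->] := soft_facts (z i) a0.
Qed.

Lemma mx_mono (c a b : R) : a <= b -> Num.max (c - b) 0 <= Num.max (c - a) 0.
Proof. by move=> h; rewrite !maxEle; case: (leP (c - b) 0) => ?; case: (leP (c - a) 0) => ?; lra. Qed.

Lemma le_maxl' (x y : R) : x <= Num.max x y. Proof. by rewrite le_max lexx. Qed.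
Lemma le_maxr' (x y : R) : y <= Num.max x y. Proof. by rewrite le_max lexx orbT. Qed.

Lemma mx_lip (c a b : R) : `|Num.max (c - a) 0 - Num.max (c - b) 0| <= `|a - b|.
Proof.
have [hab|hab] := leP a b.
  rewrite (ler0_norm (x := a - b)); last lra.
  rewrite !maxEle; case: (leP (c - a) 0) => ?; case: (leP (c - b) 0) => ?;
  rewrite ler_norml; apply/andP; split; lra.
rewrite (ger0_norm (x := a - b)); last lra.
rewrite !maxEle; case: (leP (c - a) 0) => ?; case: (leP (c - b) 0) => ?;
rewrite ler_norml; apply/andP; split; lra.
Qed.

Lemma mx_conv (c a x b : R) : a <= x -> x <= b ->
  (b - a) * Num.max (c - x) 0 <= (b - x) * Num.max (c - a) 0 + (x - a) * Num.max (c - b) 0.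
Proof.
move=> h1 h2.
have m1 : c - a <= Num.max (c - a) 0 := le_maxl' _ _.
have m2 : c - b <= Num.max (c - b) 0 := le_maxl' _ _.
have m3 : 0 <= Num.max (c - a) 0 := le_maxr' _ _.
have m4 : 0 <= Num.max (c - b) 0 := le_maxr' _ _.
have p1 : (b - x) * (c - a) <= (b - x) * Num.max (c - a) 0 by apply: ler_wpM2l; lra.
have p2 : (x - a) * (c - b) <= (x - a) * Num.max (c - b) 0 by apply: ler_wpM2l; lra.
have p3 : 0 <= (b - x) * Num.max (c - a) 0 by apply: mulr_ge0; lra.
have p4 : 0 <= (x - a) * Num.max (c - b) 0 by apply: mulr_ge0; lra.
rewrite (maxEle (c - x)); case: ifP => _.
  rewrite mulr0; lra.
have e : (b - a) * (c - x) = (b - x) * (c - a) + (x - a) * (c - b) by ring.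
rewrite e; lra.
Qed.

Lemma Fz_mono n (z : 'I_n -> R) (a b : R) : a <= b -> Fz z b <= Fz z a.
Proof. by move=> h; apply: ler_sum => i _; apply: mx_mono. Qed.

Lemma Fz_lip n (z : 'I_n -> R) (a b : R) : `|Fz z a - Fz z b| <= `|a - b| *+ n.
Proof.
rewrite /Fz -sumrB; apply: (le_trans (ler_norm_sum _ _ _)).
rewrite -[n in _ *+ n]card_ord -sumr_const; apply: ler_sum => i _; apply: mx_lip.
Qed.

Lemma Fz_conv n (z : 'I_n -> R) (a x b : R) : a <= x -> x <= b ->
  (b - a) * Fz z x <= (b - x) * Fz z a + (x - a) * Fz z b.
Proof.
move=> h1 h2; rewrite /Fz !mulr_sumr -big_split; apply: ler_sum => i _.
exact: mx_conv.
Qed.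

Lemma Fz_ge n (z : 'I_n -> R) (a : R) i : `|z i| - a <= Fz z a.
Proof.
rewrite /Fz (bigD1 i) //=.
have h1 := le_maxl' (`|z i| - a) 0.
have h2 : 0 <= \sum_(j < n | j != i) Num.max (`|z j| - a) 0.
  by apply: sumr_ge0 => j _; exact: le_maxr'.
lra.
Qed.

Lemma Fz_ge0 n (z : 'I_n -> R) (a : R) : 0 <= Fz z a.
Proof. by apply: sumr_ge0 => j _; exact: le_maxr'. Qed.

Lemma Fz0 n (z : 'I_n -> R) : Fz z 0 = l1norm z.
Proof.
apply: eq_bigr => i _; rewrite subr0 maxEle; case: leP => // h.
by apply/eqP; rewrite eq_le h normr_ge0.
Qed.


Lemma lip_cont (f : R -> R) (L : R) : 0 < L ->
  (forall x y, `|f x - f y| <= L * `|x - y|) -> continuous f.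
Proof.
move=> L0 H x; apply/cvgrPdist_lt => e e0.
apply/nbhs_ballP; exists (e / L); first by rewrite /= divr_gt0.
move=> y; rewrite /ball /= => hy.
apply: (le_lt_trans (H x y)).
by rewrite -ltr_pdivlMl // mulrC.
Qed.

Lemma root_ex n (z : 'I_n -> R) (w lam : R) : 0 < lam -> w < Fz z lam + lam ->
  Fz z (2 * lam) <= w ->
  exists a, 0 < a /\ a <= lam /\ Fz z (lam + a) = w - lam + a.
Proof.
move=> l0 h0 h1.
pose g := fun a => Fz z (lam + a) - (w - lam + a).
have gc : continuous g.
  apply: (@lip_cont g (n%:R + 1)).
    have : (0 : R) <= n%:R by apply: ler0n.
    lra.
  move=> x y; rewrite /g.
  have := Fz_lip z (lam + x) (lam + y).
  have -> : lam + x - (lam + y) = x - y by ring.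
  rewrite -mulr_natr => h.
  have e : Fz z (lam + x) - (w - lam + x) - (Fz z (lam + y) - (w - lam + y))
     = (Fz z (lam + x) - Fz z (lam + y)) - (x - y) by ring.
  rewrite e; apply: (le_trans (ler_normB _ _)); lra.
have g0 : 0 < g 0 by rewrite /g addr0; lra.
have gl : g lam <= 0.
  by rewrite /g (_ : lam + lam = 2 * lam); [lra | ring].
have [c hc gc0] := @IVT R g 0 lam 0 (ltW l0) (continuous_subspaceT gc)
  (ltac:(rewrite ge_min le_max; apply/andP; split; apply/orP; [right|left]; lra)).
move: hc; rewrite in_itv /= => /andP[c0 cl].
have cn0 : c != 0 by apply/eqP => e; move: gc0; rewrite e => gc0; move: g0; rewrite gc0 ltxx.
exists c; split; first by rewrite lt_def cn0 c0.
split => //; move: gc0; rewrite /g; lra.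
Qed.


Lemma l1norm0 n : l1norm (fun _ : 'I_n => (0 : R)) = 0.
Proof. by rewrite /l1norm big1 // => i _; rewrite normr0. Qed.

Lemma linf_ge n (z : 'I_n -> R) i : `|z i| <= linfnorm z.
Proof. rewrite /linfnorm; exact: (@le_bigmax _ R _ 0 (fun i => `|z i|) i). Qed.

Lemma linf_ex n (z : 'I_n -> R) (w : R) : 0 <= w -> w < linfnorm z -> exists i, w < `|z i|.
Proof.
move=> w0 h; apply/not_existsP => hn; move: h; apply/negP; rewrite -leNgt.
apply: bigmax_le => // i _; rewrite leNgt; apply/negP => hi; apply: (hn i); exact: hi.
Qed.

Lemma zero_case n (w : R) (z : 'I_n -> R) (lam bp bm : R) (th : 'I_n -> R) :
  0 <= w -> is_solution w z lam bp bm th -> w <= lam ->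
  (linfnorm z <= lam \/ w + linfnorm z <= 2 * lam) ->
  bp - bm = 0 /\ th = (fun _ => 0).
Proof.
move=> w0 hs hl hm.
have := @uniq_sol n w z lam bp bm th 0 0 (fun _ => 0) (linfnorm z) hs.
rewrite subr0 l1norm0; apply.
- by rewrite /feasible l1norm0; split; [|split]; lra.
- by move=> i; rewrite subr0 linf_ge.
- by move=> i; rewrite normr0 !mulr0.
- move=> b' s' t' hb /andP[s0 st].
  move: hb; rewrite ler_norml => /andP[hb1 hb2].
  have h1 : w * b' <= w * t' by apply: ler_wpM2l.
  have h2 : 0 <= (lam - w) * t' by apply: mulr_ge0; lra.
  case: hm => hm.
    have h3 : 0 <= (lam - linfnorm z) * s' by apply: mulr_ge0; lra.
    rewrite addr0 subr0; lra.
  have h3 : 0 <= (2 * lam - w - linfnorm z) * t' by apply: mulr_ge0; lra.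
  case: (leP (linfnorm z) lam) => hk.
    have h4 : 0 <= (lam - linfnorm z) * s' by apply: mulr_ge0; lra.
    rewrite addr0 subr0; lra.
  have h4 : 0 <= (linfnorm z - lam) * (t' - s') by apply: mulr_ge0; lra.
  rewrite addr0 subr0; lra.
Qed.

Lemma alpha_case n (w : R) (z : 'I_n -> R) (lam bp bm : R) (th : 'I_n -> R) (a t : R) :
  is_solution w z lam bp bm th -> 0 <= a -> a <= lam ->
  0 <= w - lam + a -> w - lam + a <= t -> Fz z (lam + a) <= t ->
  (lam - a) * (w - lam + a) + a * Fz z (lam + a) = lam * t ->
  bp - bm = w - lam + a /\ th = softv z (lam + a).
Proof.
move=> hs a0 al b0 bt st eq.
have la0 : 0 <= lam + a by lra.
have hl1 : l1norm (softv z (lam + a)) = Fz z (lam + a) by apply: Fz_l1.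
have e1 : (t + (w - lam + a)) / 2 - (t - (w - lam + a)) / 2 = w - lam + a by field.
have e2 : (t + (w - lam + a)) / 2 + (t - (w - lam + a)) / 2 = t by field.
have := @uniq_sol n w z lam bp bm th ((t + (w - lam + a)) / 2) ((t - (w - lam + a)) / 2)
   (softv z (lam + a)) (lam + a) hs.
rewrite e1 e2 hl1; apply.
- rewrite /feasible hl1 e2; split; [|split]; lra.
- by move=> i; have [] := soft_facts (z i) la0.
- by move=> i; have [] := soft_facts (z i) la0.
- move=> b' s' t' hb /andP[s0 st'].
  move: hb; rewrite ler_norml => /andP[hb1 hb2].
  have h1 : 0 <= (lam - a) * (t' - b') by apply: mulr_ge0; lra.
  have h2 : 0 <= a * (t' - s') by apply: mulr_ge0; lra.
  lra.
Qed.


Lemma E1 n (w : R) (z : 'I_n -> R) (lam : R) : 0 <= lam ->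
  (lam%:E < tlam1 w z)%E -> w < Fz z lam + lam.
Proof.
move=> l0 h; rewrite ltNge; apply/negP => hc; move: h; apply/negP; rewrite -leNgt.
apply: ereal_inf_lbound; exists lam => //; split => //; rewrite Fz_l1 //.
Qed.

Lemma Fz_w n (z : 'I_n -> R) (w : R) : linfnorm z <= w -> Fz z w = 0.
Proof.
move=> h; rewrite /Fz big1 // => i _; rewrite maxEle ifT //.
have := linf_ge z i; lra.
Qed.

Lemma E2 n (w : R) (z : 'I_n -> R) (lam : R) : 0 <= lam -> lam < w ->
  linfnorm z <= w -> (tlam1 w z <= lam%:E)%E -> Fz z lam + lam <= w.
Proof.
move=> l0 lw hm h; rewrite leNgt; apply/negP => hc.
pose d := (Fz z lam + lam - w) / (n%:R + 1).
have n0 : (0 : R) <= n%:R by apply: ler0n.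
have d0 : 0 < d by apply: divr_gt0; lra.
have dn : d * (n%:R + 1) = Fz z lam + lam - w by rewrite /d mulfVK //; apply/lt0r_neq0; lra.
have : (tlam1 w z < (lam + d)%:E)%E by apply: (le_lt_trans h); rewrite lte_fin; lra.
move=> /ereal_inf_lt [_ [l [l0' hl] <-]]; rewrite lte_fin => ll.
rewrite Fz_l1 // in hl.
case: (leP l lam) => hll.
  have := Fz_conv z hll (ltW lw); rewrite (Fz_w hm) mulr0 addr0 => hcv.
  have : (w - l) * (Fz z lam - (w - lam)) <= 0.
    have : (w - lam) * Fz z l <= (w - lam) * (w - l) by apply: ler_wpM2l; lra.
    lra.
  have wl : 0 < w - l by lra.
  rewrite pmulr_rle0 //; lra.
have := Fz_lip z lam l; rewrite -mulr_natr => hlip.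
have : `|lam - l| = l - lam by rewrite ler0_norm; [ring | lra].
move=> e; rewrite e in hlip.
move: hlip; rewrite ler_norml => /andP[_ hlip].
have : (l - lam) * n%:R <= d * n%:R by apply: ler_wpM2r; lra.
lra.
Qed.

Lemma E3 n (w : R) (z : 'I_n -> R) (lam : R) : 0 <= lam ->
  (lam%:E < tlam3 w z)%E -> w <= Fz z (2 * lam).
Proof.
move=> l0 /ereal_sup_gt [_ [l [l0' hl] <-]]; rewrite lte_fin => ll.
rewrite Fz_l1 in hl; last lra.
apply: (le_trans hl); apply: Fz_mono; lra.
Qed.

Lemma E4 n (w : R) (z : 'I_n -> R) (lam : R) : 0 <= lam ->
  (tlam3 w z <= lam%:E)%E -> Fz z (2 * lam) <= w.
Proof.
move=> l0 h; rewrite leNgt; apply/negP => hc.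
pose d := (Fz z (2 * lam) - w) / (2 * n%:R + 1).
have n0 : (0 : R) <= n%:R by apply: ler0n.
have d0 : 0 < d by apply: divr_gt0; lra.
have dn : d * (2 * n%:R + 1) = Fz z (2 * lam) - w by rewrite /d mulfVK //; apply/lt0r_neq0; lra.
have : ((lam + d)%:E <= tlam3 w z)%E.
  apply: ereal_sup_ubound; exists (lam + d) => //; split; first lra.
  rewrite Fz_l1; last lra.
  have := Fz_lip z (2 * lam) (2 * (lam + d)); rewrite -(mulr_natr _ n) => hlip.
  have : `|2 * lam - 2 * (lam + d)| = 2 * d by rewrite ler0_norm; [ring | lra].
  move=> e; rewrite e in hlip.
  move: hlip; rewrite ler_norml => /andP[_ hlip].
  have : 0 <= d * n%:R by apply: mulr_ge0; lra.
  lra.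
move=> /le_trans /(_ h); rewrite lee_fin; lra.
Qed.

End S.

Unset Implicit Arguments.

Theorem proposition1 (R : realType) (p : nat) (hp : (2 <= p)%N) (w : R)
  (hw : 0 <= w) (z : 'I_p.-1 -> R) (lam : R) (hlam : 0 < lam)
  (bp bm : R) (th : 'I_p.-1 -> R) (hsol : is_solution w z lam bp bm th) :
  let beta := bp - bm in
  (* 1. big main effect *)
  (linfnorm z <= l1norm z < w ->
     (w <= lam -> beta = 0 /\ th = (fun _ => 0)) /\
     ((tlam1 w z <= lam%:E)%E -> lam < w ->
        beta = w - lam /\ th = softv z lam) /\
     ((lam%:E < tlam1 w z)%E ->
        exists alpha : R, 0 < alpha /\ beta = w - lam + alpha /\
          th = softv z (lam + alpha))) /\
  (* 2. moderate main effect *)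
  (linfnorm z <= w <= l1norm z ->
     (w <= lam -> beta = 0 /\ th = (fun _ => 0)) /\
     ((tlam1 w z <= lam%:E)%E -> lam < w ->
        beta = w - lam /\ th = softv z lam) /\
     ((tlam3 w z <= lam%:E)%E -> (lam%:E < tlam1 w z)%E ->
        exists alpha : R, 0 < alpha /\ beta = w - lam + alpha /\
          th = softv z (lam + alpha)) /\
     ((lam%:E < tlam3 w z)%E -> beta = w /\ th = softv z (2 * lam))) /\
  (* 3. big interaction *)
  (w < linfnorm z <= l1norm z ->
     (tlam4 w z <= lam -> beta = 0 /\ th = (fun _ => 0)) /\
     ((tlam3 w z <= lam%:E)%E -> lam < tlam4 w z ->
        exists alpha : R, 0 < alpha /\ beta = w - lam + alpha /\
          th = softv z (lam + alpha)) /\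
     ((lam%:E < tlam3 w z)%E -> beta = w /\ th = softv z (2 * lam))).
Proof.
move=> beta; rewrite /beta.
have l0 : 0 <= lam := ltW hlam.
have Z : w <= lam -> (linfnorm z <= lam \/ w + linfnorm z <= 2 * lam) ->
    bp - bm = 0 /\ th = (fun _ => 0).
  by move=> h1 h2; apply: (zero_case hw hsol h1 h2).
have R0 : Fz z lam + lam <= w -> lam < w -> bp - bm = w - lam /\ th = softv z lam.
  move=> h1 h2.
  have := alpha_case (a := 0) (t := w - lam) hsol (lexx 0) l0.
  rewrite !addr0 subr0 mul0r addr0 => H; apply: H; lra.
have RA : (exists a, 0 < a /\ a <= lam /\ Fz z (lam + a) = w - lam + a) ->
    exists alpha : R, 0 < alpha /\ bp - bm = w - lam + alpha /\
          th = softv z (lam + alpha).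
  move=> [a [a0 [al ha]]]; exists a; split => //.
  have f0 := Fz_ge0 z (lam + a).
  apply: (alpha_case (t := w - lam + a) hsol (ltW a0) al); try lra.
  by rewrite ha; ring.
have RL : w <= Fz z (2 * lam) -> bp - bm = w /\ th = softv z (2 * lam).
  move=> h1.
  have e : lam + lam = 2 * lam by ring.
  have := alpha_case (a := lam) (t := Fz z (2 * lam)) hsol l0 (lexx lam).
  rewrite e => H; have [H1 H2] := H ltac:(lra) ltac:(lra) ltac:(lra) ltac:(rewrite subrr mul0r add0r; done).
  by split => //; rewrite H1; ring.
split; [|split].
- move=> /andP[hm1 hm2]; split; [|split].
  + by move=> hl; apply: Z => //; left; lra.
  + by move=> ht hl; apply: R0 => //; apply: E2 => //; lra.
  + move=> ht; apply: RA; apply: root_ex => //; first exact: E1.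
    have := @Fz_mono _ _ z 0 (2 * lam) ltac:(lra); rewrite Fz0; lra.
- move=> /andP[hm1 hm2]; split; [|split; [|split]].
  + by move=> hl; apply: Z => //; left; lra.
  + by move=> ht hl; apply: R0 => //; apply: E2 => //; lra.
  + move=> ht3 ht1; apply: RA; apply: root_ex => //; first exact: E1.
    exact: E4.
  + by move=> ht; apply: RL; apply: E3.
- move=> /andP[hm1 hm2]; split; [|split].
  + rewrite /tlam4 => hl; apply: Z; [lra | right; lra].
  + move=> ht3 ht4; apply: RA; apply: root_ex => //; last exact: E4.
    have [i hi] := linf_ex hw hm1.
    have := Fz_ge z lam i; lra.
  + by move=> ht; apply: RL; apply: E3.
Qed.
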